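(* Let $G\in\mathcal{G}(\widehat{C}_6,\widehat{C}_7)$, let $x\in V(G)$, let $A$ be a connected component of $G[N_2(x)]$ not belonging to $A^*$, and let $a\in V(A)$ with $|N(a)\cap D|=2$. Then every independent set $S\subseteq N_2(x)\setminus V(A^* )$ with $D\subseteq N(S)$ contains $a$.
   Context: All graphs are finite, simple and undirected. $\mathcal{G}(\widehat{C}_6,\widehat{C}_7)$ is the family of graphs with no subgraph (not necessarily induced) isomorphic to $C_6$ or $C_7$. For a vertex set $S$, $N_i(S)$ is the set of vertices at distance exactly $i$ from $S$, $N(S)=N_1(S)$, $N(v)=N(\{v\})$, $N_2(v)=N_2(\{v\})$ (all in $G$). $A^*$ is the set of connected components $A$ of $G[N_2(x)]$ for which there exists a vertex $a\in V(A)$ with $N(x)\cap N(a)=N(x)\cap N(V(A))$; $V(A^* )$ is the union of their vertex sets; and $D=N(x)\setminus N(V(A^* ))$. *)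

(* Defs.v *)
(* A simple graph is a symmetric irreflexive relation e on a finType T. *)
From mathcomp Require Import all_boot.
Set Implicit Arguments. Unset Strict Implicit. Unset Printing Implicit Defensive.

Section Graph.
Variables (T : finType) (e : rel T).

Definition has_cycle_subgraph (k : nat) : Prop :=
  exists s : seq T, [/\ size s = k, uniq s & path.cycle e s].

Definition Nset (S : {set T}) : {set T} :=
  [set y | (y \notin S) && [exists s in S, e s y]].

Definition Nv (v : T) : {set T} := Nset [set v].

Definition N2 (x : T) : {set T} :=
  [set y | [&& y != x, ~~ e x y & [exists z, e x z && e z y]]].

Definition indrel (x : T) : rel T :=
  [rel u v | [&& e u v, u \in N2 x & v \in N2 x]].

Definition is_comp (x : T) (A : {set T}) : bool :=
  [exists v, (v \in N2 x) && (A == [set u | connect (indrel x) v u])].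

Definition in_Astar (x : T) (A : {set T}) : bool :=
  is_comp x A && [exists a in A, Nv x :&: Nv a == Nv x :&: Nset A].

Definition VAstar (x : T) : {set T} :=
  [set u | [exists A : {set T}, in_Astar x A && (u \in A)]].

Definition Dset (x : T) : {set T} := Nv x :\: Nset (VAstar x).

Definition independent (S : {set T}) : bool :=
  [forall u in S, forall v in S, ~~ e u v].

End Graph.

(* Main.v *)
Require Import Defs.
From mathcomp Require Import all_boot.
Set Implicit Arguments. Unset Strict Implicit.

Lemma cyc6 (T:finType) (e: rel T) v1 v2 v3 v4 v5 v6 : ~ has_cycle_subgraph e 6 ->
  e v1 v2 -> e v2 v3 -> e v3 v4 -> e v4 v5 -> e v5 v6 -> e v6 v1 ->
  uniq [:: v1;v2;v3;v4;v5;v6] -> False.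
Proof.
move=> H h1 h2 h3 h4 h5 h6 u; apply: H; exists [:: v1;v2;v3;v4;v5;v6]; split=> //=.
by rewrite h1 h2 h3 h4 h5 h6.
Qed.

Lemma cyc7 (T:finType) (e: rel T) v1 v2 v3 v4 v5 v6 v7 : ~ has_cycle_subgraph e 7 ->
  e v1 v2 -> e v2 v3 -> e v3 v4 -> e v4 v5 -> e v5 v6 -> e v6 v7 -> e v7 v1 ->
  uniq [:: v1;v2;v3;v4;v5;v6;v7] -> False.
Proof.
move=> H h1 h2 h3 h4 h5 h6 h7 u; apply: H; exists [:: v1;v2;v3;v4;v5;v6;v7]; split=> //=.
by rewrite h1 h2 h3 h4 h5 h6 h7.
Qed.

Lemma connect_inv (T: finType) (r : rel T) (P : pred T) :
  (forall u w, P u -> r u w -> P w) -> forall v u, connect r v u -> P v -> P u.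
Proof.
move=> HP v u /connectP [p]; elim: p v => [|w p IH] v /=; first by move=> _ ->.
move=> /andP [rvw pw] hu Pv; exact: (IH w pw hu (HP _ _ Pv rvw)).
Qed.

Lemma N2P (T:finType) (e:rel T) x u :
  reflect [/\ u != x, ~~ e x u & exists z, e x z && e z u] (u \in N2 e x).
Proof.
rewrite inE; apply: (iffP and3P) => [[? ? /existsP ?]|[? ? ?]]; split => //; exact/existsP.
Qed.

Lemma NvE (T:finType) (e:rel T) v y : (y \in Nv e v) = (y != v) && e v y.
Proof.
rewrite !inE; case: (y == v) => //=; apply/existsP/idP => [[s /andP[/set1P -> //]]| h].
by exists v; rewrite in_set1 eqxx.
Qed.

Lemma NsetE (T:finType) (e:rel T) S y : (y \in Nset e S) = (y \notin S) && [exists s in S, e s y].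
Proof. by rewrite inE. Qed.

Lemma indrelE (T:finType) (e:rel T) x u v : indrel e x u v = [&& e u v, u \in N2 e x & v \in N2 e x].
Proof. by []. Qed.

Lemma N2_nadj (T:finType) (e:rel T) x u : u \in N2 e x -> e x u = false.
Proof. by case/N2P => _ /negbTE. Qed.
Lemma N2_neqx (T:finType) (e:rel T) x : x \in N2 e x -> False.
Proof. by case/N2P; rewrite eqxx. Qed.

Ltac contra := match goal with
 | H : is_true (?v != ?v) |- _ => by rewrite eqxx in H
 | H : is_true (?r ?v ?v), I : irreflexive ?r |- _ => by rewrite I in H
 | H1 : is_true (?r ?u ?v), H2 : is_true (~~ ?r ?u ?v) |- _ => by rewrite H1 in H2
 | H1 : is_true (?r ?u ?v), H2 : is_true (~~ ?r ?v ?u), S : symmetric ?r |- _ => by rewrite S H1 in H2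
 | H1 : is_true (?r ?x ?v), H2 : context [N2 ?r ?x] |- _ => by rewrite (N2_nadj H2) in H1
 | H1 : is_true (?r ?v ?x), H2 : context [N2 ?r ?x], S : symmetric ?r |- _ => by rewrite S (N2_nadj H2) in H1
 | H2 : context [N2 ?r ?x] |- _ => by case: (N2_neqx H2)
 end.

Ltac dist := apply/negP => /eqP ?; subst; contra.
Ltac uniq_tac := rewrite /= !inE ?negb_or; repeat (apply/andP; split); try dist.


Theorem corollary2p12 (T : finType) (e : rel T)
  (e_sym : symmetric e) (e_irr : irreflexive e)
  (noC6 : ~ has_cycle_subgraph e 6) (noC7 : ~ has_cycle_subgraph e 7)
  (x : T) (A : {set T}) (a : T)
  (hA : is_comp e x A) (hAn : ~~ in_Astar e x A) (ha : a \in A)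
  (hD : #|Nv e a :&: Dset e x| = 2) :
  forall S : {set T},
    independent e S -> S \subset N2 e x :\: VAstar e x ->
    Dset e x \subset Nset e S -> a \in S.
Proof.
move=> S indS subS DS.
apply/negPn/negP => aS.
have connN2 : forall v u, v \in N2 e x -> connect (indrel e x) v u -> u \in N2 e x.
  move=> v u hv c; apply: (connect_inv _ c hv) => p w _; rewrite indrelE.
  by case/and3P.
have compP : forall C, is_comp e x C -> exists2 v, v \in N2 e x & C = [set u | connect (indrel e x) v u].
  by move=> C /existsP [v /andP [hv /eqP ->]]; exists v.
have compN2 : forall C u, is_comp e x C -> u \in C -> u \in N2 e x.
  move=> C u /compP [v hv ->]; rewrite inE; exact: connN2 hv.
have isym : connect_sym (indrel e x).
  apply: sym_connect_sym => u v; rewrite !indrelE e_sym.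
  by case: (u \in N2 e x); case: (v \in N2 e x); rewrite ?andbF ?andbT.
have extract : forall C c, is_comp e x C -> ~~ in_Astar e x C -> c \in C ->
    exists c', exists d, [/\ c' \in C, e x d, e c' d & ~~ e c d].
  move=> C c hC hn hc.
  move: hn; rewrite /in_Astar hC /= negb_exists => /forallP /(_ c); rewrite hc /= => hneq.
  case: (boolP [exists d, (d \in Nv e x :&: Nv e c) != (d \in Nv e x :&: Nset e C)]) => [/existsP [d hd] | /existsPn h]; last first.
    by move: hneq; rewrite eqEsubset; case/nandP => /subsetPn [z hz1 hz2]; move: (h z); rewrite hz1 ?(negbTE hz2) // ; rewrite (negbTE hz2) hz1.
  move: hd; rewrite !in_setI !NvE NsetE.
  case hxd: (e x d); rewrite ?andbT ?andbF //=.
  have dC : d \notin C by apply/negP => /(compN2 _ _ hC) /N2P [_ h _]; rewrite hxd in h.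
  rewrite dC /=.
  case hcd: (e c d); rewrite ?andbT ?andbF /=.
    have cd : d != c by apply/negP => /eqP E; rewrite E in hxd; move: (compN2 _ _ hC hc) => /N2P [_ h _]; rewrite hxd in h.
    have -> : [exists s in C, e s d] by apply/existsP; exists c; rewrite hc hcd.
    by rewrite cd eqxx.
  move=> h; have /andP [_ /existsP [c' /andP [c'C c'd]]] : (d != x) && [exists s in C, e s d].
    by move: h; case: (_ && _).
  by exists c', d; rewrite c'C hxd c'd hcd.
move/eqP: hD => /cards2P [d1 [d2 [d12 hd]]].
have hd1 : d1 \in Nv e a :&: Dset e x by rewrite hd !inE eqxx.
have hd2 : d2 \in Nv e a :&: Dset e x by rewrite hd !inE eqxx orbT.
move: hd1; rewrite in_setI NvE => /andP [/andP [_ ad1] Dd1].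
move: hd2; rewrite in_setI NvE => /andP [/andP [_ ad2] Dd2].
have xd1 : e x d1 by move: Dd1; rewrite in_setD NvE => /andP [_ /andP [_ ->]].
have xd2 : e x d2 by move: Dd2; rewrite in_setD NvE => /andP [_ /andP [_ ->]].
have aN2 := compN2 _ _ hA ha.
have [a' [d3 [a'A xd3 a'd3 nad3]]] := extract _ _ hA hAn ha.
have a'N2 := compN2 _ _ hA a'A.
have aa' : e a a'.
  have [v hv Adef] := compP _ hA.
  have ca : connect (indrel e x) v a by move: ha; rewrite Adef inE.
  have ca' : connect (indrel e x) v a' by move: a'A; rewrite Adef inE.
  have cav : connect (indrel e x) a v by rewrite isym.
  have caa' := connect_trans cav ca'.
  have P : forall u, connect (indrel e x) a u -> (u == a) || e a u.
    move=> u c; apply: (connect_inv (P := fun u => (u == a) || e a u) _ c); last by rewrite eqxx.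
    move=> p w hp; rewrite indrelE => /and3P [epw pN2 wN2].
    case: (boolP (w == a)) => //= wa; case: (boolP (e a w)) => // naw; exfalso.
    case/orP: hp => [/eqP pa | ap]; first by rewrite pa in epw; rewrite epw in naw.
    case/N2P: wN2 => _ _ [z /andP [xz zw]].
    have wz : e w z by rewrite e_sym.
    have zx : e z x by rewrite e_sym.
    have d1a : e d1 a by rewrite e_sym.
    have d2a : e d2 a by rewrite e_sym.
    case: (boolP (z == d1)) => zd1.
      by move/eqP: zd1 => zd1; apply: (cyc6 noC6 xd2 d2a ap epw wz zx); uniq_tac.
    by apply: (cyc6 noC6 xd1 d1a ap epw wz zx); uniq_tac.
  by case/orP: (P a' caa') => // /eqP E; rewrite E in a'd3; rewrite a'd3 in nad3.
have d3a' : e d3 a' by rewrite e_sym.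
have a'a : e a' a by rewrite e_sym.
have key : forall u1 u2 s, u1 != u2 -> e x u1 -> e x u2 -> e a u1 -> e a u2 ->
    s \in S -> e s u1 ->
    exists q, [/\ ~~ e s u2, q \in N2 e x, e s q & e q u2].
  move=> u1 u2 s u12 xu1 xu2 au1 au2 sS su1.
  have u1x : e u1 x by rewrite e_sym.
  have u2x : e u2 x by rewrite e_sym.
  have u1a : e u1 a by rewrite e_sym.
  have u2a : e u2 a by rewrite e_sym.
  have u1s : e u1 s by rewrite e_sym.
  move/(subsetP subS): (sS); rewrite in_setD => /andP [sV sN2].
  have sa : s != a by apply: contraNneq aS => <-.
  have nas : ~~ e a s.
    apply/negP => as_; case: (boolP (s == a')) => sa'.
      move/eqP: sa' => sa'; rewrite sa' in su1.
      by apply: (cyc6 noC6 xd3 d3a' su1 u1a au2 u2x); uniq_tac.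
    by apply: (cyc6 noC6 xd3 d3a' a'a as_ su1 u1x); uniq_tac.
  have nsu2 : ~~ e s u2.
    apply/negP => su2.
    by apply: (cyc7 noC7 xd3 d3a' a'a au1 u1s su2 u2x); uniq_tac.
  have only : forall d, e x d -> e s d -> d = u1.
    move=> d xd sd; apply/eqP; apply/negPn/negP => du1.
    case: (boolP (d == u2)) => du2; first by rewrite (eqP du2) in sd; rewrite sd in nsu2.
    have dx : e d x by rewrite e_sym.
    by apply: (cyc6 noC6 xu2 u2a au1 u1s sd dx); uniq_tac.
  set B := [set u | connect (indrel e x) s u].
  have hB : is_comp e x B by apply/existsP; exists s; rewrite sN2 eqxx.
  have sB : s \in B by rewrite inE connect0.
  have nB : ~~ in_Astar e x B.
    by apply: contra sV => h; rewrite inE; apply/existsP; exists B; rewrite h sB.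
  have [b' [d4 [b'B xd4 b'd4 nsd4]]] := extract _ _ hB nB sB.
  case: (boolP [exists q, [&& q \in N2 e x, e s q & e q u2]]) => [/existsP [q /and3P [? ? ?]] | noq].
    by exists q.
  exfalso.
  pose Y := fun u => (u \in N2 e x) && [forall d, e x d ==> e u d ==> (d == u1)].
  have YP : forall u d, Y u -> e x d -> e u d -> d = u1.
    by move=> u d /andP [_ /forallP /(_ d)]; rewrite /= => /implyP h xd ud; apply/eqP; move: (h xd) => /implyP; apply.
  have YN2 : forall u, Y u -> u \in N2 e x by move=> u /andP [].
  have Yd1 : forall u, Y u -> e u u1.
    move=> u Yu; case/N2P: (YN2 _ Yu) => _ _ [z /andP [xz zu]].
    have uz : e u z by rewrite e_sym.
    by rewrite -(YP _ _ Yu xz uz).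
  have Yna : forall u, Y u -> ~~ e u a.
    move=> u Yu; apply/negP => ua.
    have uu1 := Yd1 _ Yu; have uN2 := YN2 _ Yu.
    have au : e a u by rewrite e_sym.
    have nud3 : ~~ e u d3.
      by apply/negP => ud3; rewrite (YP _ _ Yu xd3 ud3) au1 in nad3.
    by apply: (cyc6 noC6 xd3 d3a' a'a au uu1 u1x); uniq_tac.
  have step : forall v w, Y v -> indrel e x v w -> (v = s \/ exists2 v', Y v' & e v' v) -> Y w.
    move=> v w Yv; rewrite indrelE => /and3P [vw vN2 wN2] hp.
    rewrite /Y wN2 /=; apply/forallP => d; apply/implyP => xd; apply/implyP => wd.
    apply/negPn/negP => du1.
    have vu1 := Yd1 _ Yv; have nva := Yna _ Yv.
    have u1v : e u1 v by rewrite e_sym.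
    have dx : e d x by rewrite e_sym.
    have nvu2 : ~~ e v u2.
      by apply/negP => h; move: (YP _ _ Yv xu2 h) => e21; rewrite e21 eqxx in u12.
    have wa : w != a by apply/negP => /eqP E; rewrite E in vw; rewrite vw in nva.
    case: (boolP (d == u2)) => du2.
      move/eqP: du2 => du2; rewrite du2 in wd du1.
      case: hp => [Evs | [v' Yv' v'v]].
        by move: noq; rewrite negb_exists => /forallP /(_ w); rewrite wN2 wd -Evs vw.
      case: (boolP (v' == w)) => v'w.
        by rewrite (eqP v'w) in Yv'; rewrite (YP _ _ Yv' xu2 wd) eqxx in du1.
      have v'N2 := YN2 _ Yv'.
      have u1v' : e u1 v' by rewrite e_sym; exact: Yd1.
      by apply: (cyc6 noC6 xu1 u1v' v'v vw wd u2x); uniq_tac.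
    by apply: (cyc7 noC7 u1v vw wd dx xu2 u2a au1); uniq_tac.
  have pathY : forall p v, path (indrel e x) v p -> Y v ->
      (v = s \/ exists2 v', Y v' & e v' v) -> Y (last v p).
    elim=> [|w p IH] v //= /andP [vw pw] Yv hp.
    apply: IH pw (step _ _ Yv vw hp) _; right; exists v => //.
    by move: vw; rewrite indrelE => /and3P [].
  have Ys : Y s.
    rewrite /Y sN2; apply/forallP => d; apply/implyP => xd; apply/implyP => sd.
    by rewrite (only _ xd sd).
  have Yb' : Y b' by move: b'B; rewrite inE => /connectP [p pp ->]; apply: pathY pp Ys (or_introl erefl).
  by rewrite (YP _ _ Yb' xd4 b'd4) su1 in nsd4.
have [s1 s1S s1d1] : exists2 s1, (s1 \in S) & e s1 d1.
  by move: (subsetP DS _ Dd1); rewrite NsetE => /andP [_ /existsP [s /andP [? ?]]]; exists s.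
have [s2 s2S s2d2] : exists2 s2, (s2 \in S) & e s2 d2.
  by move: (subsetP DS _ Dd2); rewrite NsetE => /andP [_ /existsP [s /andP [? ?]]]; exists s.
have [q [ns1d2 qN2 s1q qd2]] := key d1 d2 s1 d12 xd1 xd2 ad1 ad2 s1S s1d1.
have d21 : d2 != d1 by rewrite eq_sym.
have [r [ns2d1 rN2 s2r rd1]] := key d2 d1 s2 d21 xd2 xd1 ad2 ad1 s2S s2d2.
have s1N2 : s1 \in N2 e x by move/(subsetP subS): s1S; rewrite in_setD => /andP [].
have s2N2 : s2 \in N2 e x by move/(subsetP subS): s2S; rewrite in_setD => /andP [].
have ns12 : ~~ e s1 s2.
  by move: indS => /forall_inP /(_ s1 s1S) /forall_inP /(_ s2 s2S).
have d1s1 : e d1 s1 by rewrite e_sym.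
have d2s2 : e d2 s2 by rewrite e_sym.
have d2x : e d2 x by rewrite e_sym.
case: (boolP (r == q)) => rq.
  move/eqP: rq => rq; rewrite rq in s2r rd1.
  have qs2 : e q s2 by rewrite e_sym.
  by apply: (cyc6 noC6 xd1 d1s1 s1q qs2 s2d2 d2x); uniq_tac.
by apply: (cyc6 noC6 d1s1 s1q qd2 d2s2 s2r rd1); uniq_tac.
Qed.
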